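(* Let $(X_n)_{n\ge0}$ be a Markov chain on $\mathbb Z_+$ with transition matrix $P$. Assume that for every $i\in\mathbb Z_+$ there is a positive non-increasing function $g_i$ on $\mathbb Z_+$ such that $g_i(X_n)$ is a supermartingale (i.e. $\sum_k P(j,k)g_i(k)\le g_i(j)$ for all $j\in\mathbb Z_+$), and that $$p_1:=\sup_{i\ge1}\frac{g_i(i)}{g_i(i-1)}<1,\qquad p_2:=\inf_{i\ge0}\mathbb P_i\{X_1\ge i+1\}>0.$$ Then there exists $\gamma>0$ such that $\sup_{i\in\mathbb Z_+}\mathbb E_ie^{\gamma\ell(i)}<\infty$.
   Context: $\mathbb P_i,\mathbb E_i$ denote probability and expectation given $X_0=i$; the local time at $i$ is $\ell(i):=\sum_{n=0}^\infty\mathbf 1\{X_n=i\}$. *)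

(* Defs.v *)
From Stdlib Require Import Reals Lra Lia Arith.
Open Scope R_scope.

Definition stochastic (P : nat -> nat -> R) : Prop :=
  (forall j k, 0 <= P j k) /\ (forall j, infinite_sum (P j) 1).

Definition ind_eq (j i : nat) : R := if Nat.eqb j i then 1 else 0.

(* F N j = E_j [ exp (gam * l_N(i)) ], where l_N(i) = #{ 0 <= n < N : X_n = i }
   is the local time at i truncated at time N. *)
Definition trunc_exp_local_time (P : nat -> nat -> R) (gam : R) (i : nat)
  (F : nat -> nat -> R) : Prop :=
  (forall j, F 0%nat j = 1) /\
  (forall N j, exists s, infinite_sum (fun k => P j k * F N k) s /\
                         F (S N) j = exp (gam * ind_eq j i) * s).

(* Main.v *)
Require Import Defs.
From Stdlib Require Import Reals Lra Lia Arith.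
Open Scope R_scope.

Lemma isum_cv a l : infinite_sum a l -> Un_cv (fun n => sum_f_R0 a n) l.
Proof. intro H; exact H. Qed.

Lemma cv_const (B : R) : Un_cv (fun _ => B) B.
Proof. intros eps He; exists 0%nat; intros; rewrite R_dist_eq; lra. Qed.

Lemma lim_le a l B : infinite_sum a l -> (forall n, sum_f_R0 a n <= B) -> l <= B.
Proof.
  intros H Hb. eapply Rle_cv_lim; [exact Hb | exact (isum_cv _ _ H) | exact (cv_const B)].
Qed.

Lemma part_le a l n : infinite_sum a l -> (forall k, 0 <= a k) -> sum_f_R0 a n <= l.
Proof. intros H Hp. apply sum_incr; auto. Qed.

Lemma sum_lin (a b : R) x y n :
  sum_f_R0 (fun k => a * x k - b * y k) n = a * sum_f_R0 x n - b * sum_f_R0 y n.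
Proof. induction n; simpl; [lra|]. rewrite IHn; lra. Qed.

Lemma sum_scal (c : R) x n : sum_f_R0 (fun k => x k * c) n = sum_f_R0 x n * c.
Proof. induction n; simpl; [lra|]. rewrite IHn; lra. Qed.

Theorem proposition5 (P : nat -> nat -> R) (g : nat -> nat -> R) :
  stochastic P ->
  (* g_i positive *)
  (forall i k, 0 < g i k) ->
  (* g_i non-increasing *)
  (forall i j k, (j <= k)%nat -> g i k <= g i j) ->
  (* g_i(X_n) supermartingale: sum_k P(j,k) g_i(k) <= g_i(j) *)
  (forall i j, exists s, infinite_sum (fun k => P j k * g i k) s /\ s <= g i j) ->
  (* p1 = sup_{i>=1} g_i(i)/g_i(i-1) < 1 *)
  (exists p1, p1 < 1 /\ forall i, (1 <= i)%nat -> g i i / g i (i - 1)%nat <= p1) ->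
  (* p2 = inf_{i>=0} P_i{X_1 >= i+1} > 0 *)
  (exists p2, 0 < p2 /\ forall i, exists s,
       infinite_sum (fun k => if Nat.leb (S i) k then P i k else 0) s /\ p2 <= s) ->
  (* conclusion: sup_i E_i e^{gam l(i)} < infinity, with E_i e^{gam l(i)}
     = sup_N E_i e^{gam l_N(i)} by monotone convergence *)
  exists gam, 0 < gam /\ exists M : R,
    forall i (F : nat -> nat -> R), trunc_exp_local_time P gam i F ->
      forall N, F N i <= M.
Proof.
  intros [Pnn Psum] gpos gmono gsup [p1 [Hp1 Hg1]] [p2 [Hp2 Hs2]].
  set (q := 1 - (1 - p1) * p2).
  set (Q := Rmax 0 q).
  assert (HQ0 : 0 <= Q) by apply Rmax_l.
  assert (HqQ : q <= Q) by apply Rmax_r.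
  assert (HQ1 : Q < 1).
  { unfold Q, Rmax; destruct (Rle_dec 0 q); [|lra].
    unfold q. assert (0 < (1 - p1) * p2) by (apply Rmult_lt_0_compat; lra). lra. }
  assert (Hpos : 0 < 2 / (1 + Q)).
  { unfold Rdiv; apply Rmult_lt_0_compat; [lra|apply Rinv_0_lt_compat; lra]. }
  exists (ln (2 / (1 + Q))). split.
  { rewrite <- ln_1. apply ln_increasing; [lra|].
    apply (Rmult_lt_reg_r (1 + Q)); [lra|]. unfold Rdiv.
    rewrite Rmult_assoc, Rinv_l by lra. lra. }
  exists 2. intros i F [F0 FS].
  set (G := g (S i)).
  set (u := fun k => Rmin 1 (G k / G i)).
  assert (Gp : forall k, 0 < G k) by (intros; apply gpos).
  assert (u0 : forall k, 0 <= u k).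
  { intro k; unfold u; apply Rmin_glb; [lra|].
    unfold Rdiv; apply Rlt_le, Rmult_lt_0_compat; [auto|apply Rinv_0_lt_compat; auto]. }
  assert (u1 : forall k, u k <= 1) by (intro; apply Rmin_l).
  assert (ui : u i = 1).
  { unfold u. unfold Rdiv; rewrite Rinv_r by (specialize (Gp i); lra).
    apply Rmin_left; lra. }
  assert (up : forall k, (S i <= k)%nat -> u k <= p1).
  { intros k Hk. unfold u. eapply Rle_trans; [apply Rmin_r|].
    eapply Rle_trans; [|apply (Hg1 (S i)); lia].
    replace (S i - 1)%nat with i by lia. fold G.
    unfold Rdiv; apply Rmult_le_compat_r.
    - apply Rlt_le, Rinv_0_lt_compat; auto.
    - apply gmono; auto. }
  assert (key : forall N j, F N j <= 1 + u j).
  { induction N as [|N IH]; intro j.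
    - rewrite F0. specialize (u0 j); lra.
    - destruct (FS N j) as [s [Hs HF]]. rewrite HF.
      destruct (Nat.eqb_spec j i) as [->|Hne].
      + unfold ind_eq; rewrite Nat.eqb_refl, Rmult_1_r, exp_ln by exact Hpos.
        rewrite ui.
        destruct (Hs2 i) as [s' [Hs' Hps']].
        assert (Hb : s <= 2 * 1 - (1 - p1) * s').
        { apply (Rle_cv_lim (Un := fun n => sum_f_R0 (fun k => P i k * F N k) n)
             (Vn := fun n => 2 * sum_f_R0 (P i) n - (1 - p1) *
                sum_f_R0 (fun k => if Nat.leb (S i) k then P i k else 0) n)).
          - intro n. cbv beta. rewrite <- sum_lin. apply sum_Rle. intros k _.
            specialize (IH k). specialize (Pnn i k).
            assert (P i k * F N k <= P i k * (1 + u k)) by (apply Rmult_le_compat_l; lra).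
            destruct (Nat.leb_spec (S i) k) as [Hk|Hk].
            + specialize (up k Hk).
              assert (P i k * u k <= P i k * p1) by (apply Rmult_le_compat_l; lra). nra.
            + specialize (u1 k). assert (P i k * u k <= P i k * 1) by (apply Rmult_le_compat_l; lra). nra.
          - exact (isum_cv _ _ Hs).
          - apply CV_minus; apply CV_mult; try apply cv_const; apply isum_cv; auto. }
        assert (Hsq : s <= 1 + Q).
        { assert ((1 - p1) * p2 <= (1 - p1) * s') by (apply Rmult_le_compat_l; lra).
          unfold q in HqQ. lra. }
        apply (Rle_trans _ (2 / (1 + Q) * (1 + Q))).
        * apply Rmult_le_compat_l; lra.
        * unfold Rdiv; rewrite Rmult_assoc, Rinv_l by lra; lra.
      + unfold ind_eq. apply Nat.eqb_neq in Hne. rewrite Hne, Rmult_0_r, exp_0, Rmult_1_l.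
        apply (lim_le _ _ _ Hs). intro n.
        destruct (gsup (S i) j) as [S0 [HS0 HS0le]]. fold G in HS0, HS0le.
        assert (HP1 : sum_f_R0 (P j) n <= 1).
        { apply part_le; auto. }
        assert (HPG : sum_f_R0 (fun k => P j k * G k) n <= G j).
        { eapply Rle_trans; [apply (part_le _ S0)|]; auto.
          intro k; apply Rmult_le_pos; [auto|apply Rlt_le; auto]. }
        apply (Rle_trans _ (sum_f_R0 (fun k => P j k + P j k * u k) n)).
        { apply sum_Rle; intros k _. specialize (IH k). specialize (Pnn j k).
          assert (P j k * F N k <= P j k * (1 + u k)) by (apply Rmult_le_compat_l; lra). lra. }
        rewrite plus_sum.
        assert (sum_f_R0 (fun k => P j k * u k) n <= u j).
        { unfold u at 2. apply Rmin_glb.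
          - eapply Rle_trans; [|exact HP1]. apply sum_Rle; intros k _.
            specialize (u1 k); specialize (Pnn j k).
            assert (P j k * u k <= P j k * 1) by (apply Rmult_le_compat_l; lra). lra.
          - apply (Rle_trans _ (sum_f_R0 (fun k => P j k * G k * / G i) n)).
            + apply sum_Rle; intros k _. rewrite Rmult_assoc.
              apply Rmult_le_compat_l; [apply Pnn|]. unfold u; apply Rmin_r.
            + rewrite sum_scal. unfold Rdiv. apply Rmult_le_compat_r; auto.
              apply Rlt_le, Rinv_0_lt_compat; auto. }
        lra. }
  intro N. specialize (key N i). rewrite ui in key. lra.
Qed.
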